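(* Consider $\mathrm{USD}_p$ with $p\in[0,1]$, let $c_s>0$ be a constant, and let $\mathbf{x}(t_0)$ be a configuration at time $t_0$ with negative weighted bias $\Delta_{\bar{w}}(t_0) \geq c_s n$. Then, with probability at least $1-n^{-6}$, it holds that $\Delta_{\bar{w}}(t) \geq \Delta_{\bar{w}}(t_0)/2$ for all $t \in [t_0,t_0+\tau]$ for every $\tau \leq \Delta_{\bar{w}}^2(t_0)/(16\ln n)$.
   Context: Population protocol with $n$ agents, each in a state from $\{1,2,\bot\}$ (Opinion 1, Opinion 2, undecided). At each time step a scheduler picks an ordered pair $(i,j)$ of agents uniformly at random, independently of the past; only the initiator $i$ changes state. In $\mathrm{USD}_p$: if the initiator is $2$ and the responder $1$, the initiator becomes $\bot$; if the initiator is $1$ and the responder $2$, the initiator becomes $\bot$ with probability $1-p$ and otherwise stays $1$; if the initiator is $\bot$, it adopts the responder's state; otherwise nothing changes. $x_1(t),x_2(t),u(t)$ are the numbers of agents in states $1,2,\bot$ after $t$ interactions. The negative weighted bias is $\Delta_{\bar{w}}(t) := (1-p)x_2(t) - x_1(t)$. *)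

(* Defs.v *)
From HB Require Import structures.
From mathcomp Require Import all_boot all_order all_algebra.
From mathcomp Require Import reals exp.
Set Implicit Arguments. Unset Strict Implicit. Unset Printing Implicit Defensive.
Import Order.TTheory GRing.Theory Num.Theory.
Local Open Scope ring_scope.

Definition state := option bool.
Definition op1 : state := Some true.
Definition op2 : state := Some false.
Definition und : state := None.

Definition config (n : nat) := {ffun 'I_n -> state}.

Definition x1 n (c : config n) : nat := #|[set i | c i == op1]|.
Definition x2 n (c : config n) : nat := #|[set i | c i == op2]|.
Definition xu n (c : config n) : nat := #|[set i | c i == und]|.

Definition wbias (R : realType) (p : R) n (c : config n) : R :=
  (1 - p) * (x2 c)%:R - (x1 c)%:R.

(* New state of the initiator in USD_p, with initiator state si and responder
   state sj. [keep] is the outcome of the biased coin used when the initiator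
   is 1 and the responder is 2: keep = true (probability p) means the
   initiator stays 1, keep = false (probability 1-p) means it becomes bot. *)
Definition usd_new (keep : bool) (si sj : state) : state :=
  match si, sj with
  | Some false, Some true => und
  | Some true, Some false => if keep then op1 else und
  | None, _ => sj
  | _, _ => si
  end.

Definition usd_step n (c : config n) (i j : 'I_n) (keep : bool) : config n :=
  [ffun k => if k == i then usd_new keep (c i) (c j) else c k].

(* The scheduler picks an ordered pair (i,j) of distinct agents uniformly
   at random (n(n-1) pairs), independently of the past; the coin is
   independent with P(keep) = p. *)
Fixpoint stay_prob (R : realType) (p thr : R) (k : nat) n (c : config n) : R :=
  if wbias p c < thr then 0 else
  match k with
  | 0 => 1
  | k'.+1 =>
      ((n * n.-1)%:R)^-1 *
      \sum_(i : 'I_n) \sum_(j : 'I_n | j != i)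
         (p * stay_prob p thr k' (usd_step c i j true)
          + (1 - p) * stay_prob p thr k' (usd_step c i j false))
  end.

(* Main.v *)
Require Import Defs.
From HB Require Import structures.
From mathcomp Require Import all_boot all_order all_algebra.
From mathcomp Require Import reals exp sequences.
From mathcomp Require Import ring lra zify.
Import Order.TTheory GRing.Theory Num.Theory.
Local Open Scope ring_scope.

Definition ind {R : realType} (s t : state) : R := (s == t)%:R.

Lemma card_sum {R : realType} n (c : config n) s :
  (#|[set i | c i == s]|)%:R = \sum_i @ind R (c i) s.
Proof.
rewrite -sum1_card natr_sum big_mkcond /=; apply: eq_bigr => i _.
by rewrite inE /ind; case: eqP.
Qed.

Definition wv {R : realType} (p a : R) (s : state) : R :=
  match s with Some true => -(1+a) | Some false => (1-p) - a | None => 0 end.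

Definition W {R : realType} (p a : R) {n} (c : config n) : R := \sum_i wv p a (c i).

Lemma W_step {R : realType} (p a : R) n (c : config n) i j k :
  W p a (usd_step c i j k) = W p a c - wv p a (c i) + wv p a (usd_new k (c i) (c j)).
Proof.
rewrite /W (bigD1 i) //= [in RHS](bigD1 i) //= ffunE eqxx.
rewrite (eq_bigr (fun k0 => wv p a (c k0))); first by ring.
by move=> k0 /negbTE H; rewrite ffunE H.
Qed.

Lemma wbias_sum {R : realType} (p : R) n (c : config n) :
  wbias p c = \sum_i ((1-p) * @ind R (c i) op2 - @ind R (c i) op1).
Proof.
by rewrite /wbias /x1 /x2 !card_sum sumrB mulr_sumr.
Qed.

Lemma W_le_wbias {R : realType} (p a : R) n (c : config n) :
  0 <= a -> W p a c <= wbias p c.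
Proof.
move=> a0; rewrite wbias_sum /W; apply: ler_sum => i _.
by case: (c i) => [[]|] /=; rewrite /ind /=; lra.
Qed.

Lemma npart {R : realType} n (c : config n) :
  \sum_i @ind R (c i) op1 + \sum_i @ind R (c i) op2 + \sum_i @ind R (c i) und = n%:R.
Proof.
rewrite -!big_split /= -[n in n%:R]card_ord -sum1_card natr_sum.
by apply: eq_bigr => i _; case: (c i) => [[]|]; rewrite /ind /=; ring.
Qed.

Lemma expR_quad {R : realType} (y : R) : y <= 1/2 -> expR y <= 1 + y + 2 * y^+2.
Proof.
move=> hy.
have h1 := expR_ge1Dx (- y).
rewrite expRN in h1.
have hE := expR_gt0 y.
have h2 : (1 - y) * expR y <= 1.
  apply: le_trans (ler_wpM2r (ltW hE) h1) _.
  by rewrite mulVf // lt0r_neq0.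
have h3 : 0 <= y^+2 * (1 - 2 * y) by apply: mulr_ge0; [exact: sqr_ge0| lra].
have h4 : 0 < 1 - y by lra.
have : (1 - y) * (expR y - (1 + y + 2 * y ^+ 2)) <= 0.
  have -> : (1 - y) * (expR y - (1 + y + 2 * y ^+ 2)) =
    (1 - y) * expR y - 1 - y^+2 * (1 - 2 * y) by ring.
  lra.
rewrite pmulr_rle0 //; lra.
Qed.

Lemma dsum {R : realType} n (f g : 'I_n -> R) K :
  \sum_i \sum_j (f i * g j * K) = (\sum_i f i) * (\sum_j g j) * K.
Proof.
rewrite mulr_suml mulr_suml; apply: eq_bigr => i _.
by rewrite mulr_sumr mulr_suml.
Qed.

Lemma poly_ineq {R : realType} (p a n X1 X2 Xu lam A B : R) :
  0 <= p <= 1 -> 0 < a -> a <= 1/4 ->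
  0 <= X1 -> 0 <= X2 -> 0 <= Xu -> X1 + X2 + Xu = n ->
  2 * a * n <= (1 - p) * X2 - X1 ->
  lam = a / 4 -> A = lam * (1 + a) -> B = lam * ((1 - p) - a) ->
  X2 * X1 * (B + 2 * B^+2) + X1 * X2 * ((1 - p) * (- A + 2 * A^+2))
  + Xu * X1 * (A + 2 * A^+2) + Xu * X2 * (- B + 2 * B^+2) <= 0.
Proof.
move=> /andP[p0 p1] a0 a1 x10 x20 xu0 hn hD hlam hA hB.
have lam0 : 0 < lam by rewrite hlam; lra.
have hB2 : B^+2 <= A^+2.
  have hq : (1 - p - a)^+2 <= (1 + a)^+2.
    have : 0 <= (1 + 2 * a - (1 - p)) * (1 + (1 - p)) by apply: mulr_ge0; lra.
    nra.
  by rewrite hA hB !exprMn ler_wpM2l ?sqr_ge0.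
have hA2 : 2 * A^+2 <= lam * a.
  have h : 0 <= a^+2 * (2 - (1+a)^+2) by apply: mulr_ge0; [exact: sqr_ge0 | nra].
  have -> : lam * a = 2 * A^+2 + a^+2 * (2 - (1+a)^+2) / 8 by rewrite hA hlam; field.
  lra.
have P1 : B + 2 * B^+2 + (1 - p) * (- A + 2 * A^+2) <= 0.
  have e : B - (1 - p) * A = - lam * a * (1 + (1 - p)) by rewrite hA hB; ring.
  have : (1 - p) * (2 * A^+2) <= (1 - p) * (lam * a) by rewrite ler_wpM2l //; lra.
  nra.
have P2 : X1 * (A + 2 * A^+2) + X2 * (- B + 2 * B^+2) <= 0.
  have e : X1 * A - X2 * B = lam * (- ((1 - p) * X2 - X1) + a * (X1 + X2)) by rewrite hA hB; ring.
  have q1 : X1 * (2 * A^+2) <= X1 * (lam * a) by rewrite ler_wpM2l.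
  have q2 : X2 * (2 * B^+2) <= X2 * (lam * a).
    rewrite ler_wpM2l //; lra.
  have q3 : lam * (- ((1 - p) * X2 - X1) + 2 * a * (X1 + X2)) <= 0.
    rewrite pmulr_rle0 //; nra.
  nra.
have P1' : X2 * X1 * (B + 2 * B^+2 + (1 - p) * (- A + 2 * A^+2)) <= 0.
  by rewrite mulr_ge0_le0 // mulr_ge0.
have P2' : Xu * (X1 * (A + 2 * A^+2) + X2 * (- B + 2 * B^+2)) <= 0.
  by rewrite mulr_ge0_le0.
have -> : X2 * X1 * (B + 2 * B^+2) + X1 * X2 * ((1 - p) * (- A + 2 * A^+2))
  + Xu * X1 * (A + 2 * A^+2) + Xu * X2 * (- B + 2 * B^+2) =
  X2 * X1 * (B + 2 * B^+2 + (1 - p) * (- A + 2 * A^+2)) +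
  Xu * (X1 * (A + 2 * A^+2) + X2 * (- B + 2 * B^+2)) by ring.
lra.
Qed.

Definition gfun {R : realType} (p a : R) (s t : state) : R :=
  p * expR (a / 4 * (wv p a s - wv p a (usd_new true s t)))
  + (1 - p) * expR (a / 4 * (wv p a s - wv p a (usd_new false s t))) - 1.

Definition hfun {R : realType} (p a : R) (s t : state) : R :=
  let A := a / 4 * (1 + a) in let B := a / 4 * ((1 - p) - a) in
  @ind R s op2 * @ind R t op1 * (B + 2 * B^+2)
  + @ind R s op1 * @ind R t op2 * ((1 - p) * (- A + 2 * A^+2))
  + @ind R s und * @ind R t op1 * (A + 2 * A^+2)
  + @ind R s und * @ind R t op2 * (- B + 2 * B^+2).

Lemma g_le_h {R : realType} (p a : R) s t :
  0 <= p <= 1 -> 0 < a -> a <= 1/4 -> gfun p a s t <= hfun p a s t.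
Proof.
move=> /andP[p0 p1] a0 a1.
case: s => [[]|]; case: t => [[]|]; rewrite /gfun /hfun /ind /= ?subrr ?mulr0 ?expR0.
all: rewrite ?mul0r ?mul1r ?mulr1 ?addr0 ?add0r ?subr0 ?sub0r ?opprK.
all: try lra.
- have h := expR_quad (a / 4 * - (1 + a)) ltac:(nra).
  have h' : 0 <= 1 - p by lra.
  have := ler_wpM2l h' h. nra.
- have h := expR_quad (a / 4 * (1 - p - a)) ltac:(nra).
  have -> : forall E : R, p * E + (1 - p) * E - 1 = E - 1 by move=> E; ring.
  lra.
- have h := expR_quad (a / 4 * (1 + a)) ltac:(nra).
  have -> : forall E : R, p * E + (1 - p) * E - 1 = E - 1 by move=> E; ring.
  lra.
- have h := expR_quad (a / 4 * - (1 - p - a)) ltac:(nra).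
  have -> : forall E : R, p * E + (1 - p) * E - 1 = E - 1 by move=> E; ring.
  rewrite mulrN sqrrN in h; rewrite mulrN; lra.
Qed.

Definition Fpot {R : realType} (p a thr : R) {n} (c : config n) : R :=
  expR (a / 4 * (thr - W p a c)).

Lemma gfun_diag {R : realType} (p a : R) s : gfun p a s s = 0.
Proof. by case: s => [[]|]; rewrite /gfun /= subrr mulr0 expR0; ring. Qed.

Lemma sum_neq1 {R : realType} n (i : 'I_n) :
  \sum_(j | j != i) (1 : R) = n%:R - 1.
Proof.
have h : \sum_(j < n) (1:R) = 1 + \sum_(j | j != i) 1 by rewrite (bigD1 i).
rewrite sumr_const card_ord in h; lra.
Qed.

Lemma step_sum {R : realType} (p a thr : R) n (c : config n) :
  0 <= p <= 1 -> 0 < a -> a <= 1/4 -> (1 < n)%N ->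
  2 * a * n%:R <= wbias p c ->
  \sum_i \sum_(j | j != i)
     (p * Fpot p a thr (usd_step c i j true)
      + (1 - p) * Fpot p a thr (usd_step c i j false))
  <= (n * n.-1)%:R * Fpot p a thr c.
Proof.
move=> hp a0 a1 n1 hD.
have E : forall i j, p * Fpot p a thr (usd_step c i j true)
      + (1 - p) * Fpot p a thr (usd_step c i j false)
      = Fpot p a thr c * (gfun p a (c i) (c j) + 1).
  move=> i j; rewrite /Fpot !W_step /gfun.
  have eq : forall x y : R, a / 4 * (thr - (W p a c - x + y)) =
     a / 4 * (thr - W p a c) + a / 4 * (x - y) by move=> x y; ring.
  rewrite !eq !expRD; ring.
under eq_bigr => i _ do under eq_bigr => j _ do rewrite E.
under eq_bigr => i _ do rewrite -mulr_sumr big_split /= sum_neq1.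
rewrite -mulr_sumr big_split /= sumr_const card_ord.
have hS : \sum_(i < n) \sum_(j | j != i) gfun p a (c i) (c j) <= 0.
  have -> : \sum_(i < n) \sum_(j | j != i) gfun p a (c i) (c j) =
            \sum_(i < n) \sum_j gfun p a (c i) (c j).
    apply: eq_bigr => i _.
    by rewrite [in RHS](bigD1 i) //= gfun_diag add0r.
  apply: le_trans (_ : \sum_(i < n) \sum_j hfun p a (c i) (c j) <= 0).
    by apply: ler_sum => i _; apply: ler_sum => j _; apply: g_le_h.
  rewrite /hfun.
  under eq_bigr => i _ do rewrite !big_split /=.
  rewrite !big_split /= !dsum.
  have pos : forall s, 0 <= \sum_(i < n) @ind R (c i) s.
    by move=> s; apply: sumr_ge0 => i _; rewrite /ind ler0n.
  apply: (@poly_ineq R p a n%:R); rewrite ?pos //.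
  - exact: npart.
  - by rewrite wbias_sum sumrB -mulr_sumr in hD.
have F0 : 0 <= Fpot p a thr c by exact: expR_ge0.
have -> : (n * n.-1)%:R = (n%:R - 1) *+ n :> R.
  rewrite natrM -mulr_natl; case: n n1 {c hD E hS F0} => [|n] //= _.
  rewrite -addn1 natrD; ring.
have := mulr_ge0_le0 F0 hS; rewrite mulrDr; lra.
Qed.

Lemma sum_pairs {R : realType} n : (0 < n)%N ->
  \sum_(i < n) \sum_(j | j != i) (1 : R) = (n * n.-1)%:R.
Proof.
move=> n0; under eq_bigr => i _ do rewrite sum_neq1.
rewrite sumr_const card_ord natrM -mulr_natl; case: n n0 => [|n] //= _.
rewrite -addn1 natrD; ring.
Qed.

Lemma main_ind {R : realType} (p a thr : R) n (c : config n) k :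
  0 <= p <= 1 -> 0 < a -> a <= 1/4 -> (1 < n)%N -> 2 * a * n%:R <= thr ->
  1 - Fpot p a thr c <= stay_prob p thr k c.
Proof.
move=> hp a0 a1 n1 ht.
have F1 : forall c' : config n, wbias p c' < thr -> 1 - Fpot p a thr c' <= 0.
  move=> c' hlt; rewrite subr_le0 /Fpot -[X in X <= _]expR0 ler_expR.
  apply: mulr_ge0; first lra.
  have := @W_le_wbias R p a n c' (ltW a0); lra.
elim: k c => [|k IH] c /=; case: ifP => hlt; first exact: F1.
- have := expR_ge0 (a / 4 * (thr - W p a c)); rewrite /Fpot; lra.
- exact: F1.
have hlt' : thr <= wbias p c by rewrite leNgt hlt.
have hN : 0 < (n * n.-1)%:R :> R.
  have : (0 < n * n.-1)%N by nia. by rewrite ltr0n.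
rewrite ler_pdivlMl //.
have hS := @step_sum R p a thr n c hp a0 a1 n1 (le_trans ht hlt').
apply: le_trans (_ : \sum_(i < n) \sum_(j < n | j != i)
   (p * (1 - Fpot p a thr (usd_step c i j true))
    + (1 - p) * (1 - Fpot p a thr (usd_step c i j false))) <= _).
  rewrite mulrBr mulr1.
  have -> : \sum_(i < n) \sum_(j < n | j != i)
   (p * (1 - Fpot p a thr (usd_step c i j true))
    + (1 - p) * (1 - Fpot p a thr (usd_step c i j false))) =
    \sum_(i < n) \sum_(j < n | j != i) (1 : R) - \sum_(i < n) \sum_(j < n | j != i)
     (p * Fpot p a thr (usd_step c i j true)
      + (1 - p) * Fpot p a thr (usd_step c i j false)).
    rewrite -sumrB; apply: eq_bigr => i _; rewrite -sumrB; apply: eq_bigr => j _.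
    ring.
  have -> : \sum_(i < n) \sum_(j | j != i) (1 : R) = (n * n.-1)%:R.
    apply: sum_pairs; exact: ltnW.
  lra.
case/andP: hp => p0 p1.
apply: ler_sum => i _; apply: ler_sum => j _.
apply: lerD; apply: ler_wpM2l; rewrite ?subr_ge0 //; exact: IH.
Qed.

Lemma W_ge {R : realType} (p a : R) n (c : config n) :
  0 <= a -> wbias p c - a * n%:R <= W p a c.
Proof.
move=> a0.
have -> : wbias p c - a * n%:R = \sum_i ((1-p) * @ind R (c i) op2 - @ind R (c i) op1 - a).
  by rewrite sumrB sumr_const card_ord -wbias_sum mulr_natr.
rewrite /W; apply: ler_sum => i _.
by case: (c i) => [[]|] /=; rewrite /ind /=; lra.
Qed.

Lemma exp_poly {R : realType} (b : R) (n : nat) :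
  0 < b -> 5040 / b ^+ 7 < n%:R -> (n%:R : R) ^+ 6 <= expR (b * n%:R).
Proof.
move=> b0 hK.
have n0 : (0 : R) <= n%:R by rewrite ler0n.
have x0 : 0 <= b * n%:R by rewrite mulr_ge0 // ltW.
have h := expR_ge1Dxn 6 x0.
apply: le_trans h.
have b7 : 0 < b ^+ 7 by rewrite exprn_gt0.
rewrite ltr_pdivrMr // in hK.
have -> : ((7`!)%:R : R) = 5040 by [].
have : (n%:R : R) ^+ 6 * 5040 <= (n%:R) ^+ 6 * (n%:R * b ^+ 7).
  by rewrite ler_wpM2l ?exprn_ge0 // ltW.
have e : (b * n%:R) ^+ 7 / 5040 = (n%:R) ^+ 6 * (n%:R * b ^+ 7) / 5040 by field.
rewrite e.
have p6 : (0:R) <= (n%:R) ^+ 6 by rewrite exprn_ge0.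
lra.
Qed.

Theorem lemma13 (R : realType) (p c_s : R) :
  0 <= p <= 1 -> 0 < c_s ->
  exists n0 : nat, forall (n : nat) (c : config n) (tau : nat),
    (n0 <= n)%N ->
    c_s * n%:R <= wbias p c ->
    tau%:R <= (wbias p c) ^+ 2 / (16 * ln (n%:R : R)) ->
    1 - ((n%:R : R) ^+ 6)^-1 <= stay_prob p (wbias p c / 2) tau c.
Proof.
move=> hp cs0.
pose m := Num.min c_s 1.
have m0 : 0 < m by rewrite /m lt_min cs0 ltr01.
have mc : m <= c_s by rewrite /m ge_min lexx.
have m1 : m <= 1 by rewrite /m ge_min lexx orbT.
pose a := m / 4.
have a0 : 0 < a by rewrite /a; lra.
have a1 : a <= 1/4 by rewrite /a; lra.
pose y := (a ^+ 2 / 4) ^+ 7.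
have y0 : 0 < y by rewrite /y exprn_gt0 // divr_gt0 // exprn_gt0.
pose K := 5040 / y.
exists (maxn 2 (Num.Def.archi_bound K)).
move=> n c tau hn hcs htau.
have n2 : (1 < n)%N by move: hn; rewrite geq_max => /andP[].
have hK : K < n%:R.
  have K0 : 0 <= K by rewrite /K divr_ge0 // ltW.
  apply: lt_le_trans (archi_boundP K0) _.
  by rewrite ler_nat; move: hn; rewrite geq_max => /andP[].
have n0 : (0 : R) <= n%:R by rewrite ler0n.
set D := wbias p c in hcs *.
have ht : 2 * a * n%:R <= D / 2.
  have := mulr_ge0 (_ : 0 <= c_s - 4 * a) n0.
  have : 0 <= c_s - 4 * a by rewrite /a; lra.
  move=> h1 /(_ h1); lra.
have h := @main_ind R p a (D / 2) n c tau hp a0 a1 n2 ht.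
suff : Fpot p a (D / 2) c <= ((n%:R : R) ^+ 6)^-1 by lra.
have hW := @W_ge R p a n c (ltW a0).
apply: (@le_trans _ _ (expR (- (a ^+ 2 / 4 * n%:R)))).
  rewrite /Fpot ler_expR.
  have : a / 4 * (D / 2 - W p a c) <= a / 4 * (- a * n%:R).
    have a4 : 0 <= a / 4 by lra.
    rewrite ler_wpM2l //.
    have : 4 * a * n%:R <= D.
      have := mulr_ge0 (_ : 0 <= c_s - 4 * a) n0.
      have : 0 <= c_s - 4 * a by rewrite /a; lra.
      move=> h1 /(_ h1); lra.
    rewrite /D in hW *; lra.
  rewrite expr2; lra.
have b0 : 0 < a ^+ 2 / 4 by rewrite divr_gt0 // exprn_gt0.
have n6 : (0 : R) < n%:R ^+ 6 by rewrite exprn_gt0 // ltr0n; exact: ltnW.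
rewrite expRN lef_pV2 ?posrE ?expR_gt0 //.
exact: exp_poly.
Qed.
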